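(* Let $G$ be a graph with vertex set $\{0,\dots,n\}$ and sink $0$. The following are equivalent: (i) every SR state on $G$ is DR (so the sets of SR and DR states coincide); (ii) every minimal SR state on $G$ is DR; (iii) the induced subgraph $G(\{1,\dots,n\})$ obtained by deleting the sink and its incident edges contains no cycle (in particular no pair of vertices joined by a multiple edge).
   Context: A graph $G$ here is a finite, connected, undirected multigraph without loops with vertex set $\{0,1,\dots,n\}$; vertex $0$ is the sink. A configuration is $c\in\mathbb{Z}_{\ge0}^n$, stable if $c_i<\deg(i)$ for all $i\in[n]$. ASM: an unstable vertex topples by sending one grain along each incident edge (grains sent to the sink disappear). SSM (parameter $p\in(0,1)$): an unstable vertex $i$, independently for each incident edge, sends one grain along it with probability $p$, otherwise keeps it. Each model gives a Markov chain on stable configurations: add a grain at vertex $i$ with probability $\mu_i>0$, then stabilise. DR = recurrent for the ASM chain, SR = recurrent for the SSM chain. Minimal SR = minimal among SR states for the componentwise order. Known facts: a stable $c$ is SR iff there is a sink-rooted orientation $\mathcal{O}$ (sink is the unique vertex with all edges incoming) with $c_i\ge\mathrm{in}^{\mathcal{O}}_i$ for all $i\in[n]$, and DR iff such an orientation exists that is acyclic. *)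

(* Defs.v *)
From mathcomp Require Import all_boot.
From Stdlib Require Import Relations.
Set Implicit Arguments. Unset Strict Implicit. Unset Printing Implicit Defensive.

(* A multigraph on vertex set {0,...,n} = 'I_n.+1 is given by its
   multiplicity matrix  m i j  = number of edges between i and j.
   Vertex 0 (ord0) is the sink. *)
Section Sandpile.
Variable n : nat.
Notation V := 'I_n.+1.
Variable m : V -> V -> nat.

Definition sink : V := ord0.

Definition adj : rel V := [rel a b | 0 < m a b].
Definition is_graph : Prop :=
  (forall i j, m i j = m j i) /\ (forall i, m i i = 0) /\
  (forall i j, connect adj i j).

Definition deg (i : V) : nat := \sum_(j : V) m i j.

(* configurations: functions V -> nat vanishing at the sink
   (i.e. elements of Z_{>=0}^n, coordinates indexed by 1..n) *)
Definition config := V -> nat.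

Definition stable (c : config) : Prop :=
  c sink = 0 /\ forall i : V, i != sink -> c i < deg i.

(* vertex i (non-sink, unstable) sends k j grains along its edges to j,
   with k j <= m i j; grains sent to the sink disappear. *)
Definition topple_by (c : config) (i : V) (k : V -> nat) : config :=
  fun j => if j == sink then 0
           else if j == i then c i - \sum_(l : V) k l
           else c j + k j.

Definition asm_topple (c c' : config) : Prop :=
  exists i : V, [/\ i != sink, deg i <= c i & c' = topple_by c i (m i)].

(* SSM toppling (with positive probability, p in (0,1)): for each incident
   edge, independently, one grain is sent or kept; any choice of the set of
   sending edges has positive probability. *)
Definition ssm_topple (c c' : config) : Prop :=
  exists i : V, [/\ i != sink, deg i <= c i &
    exists k : V -> nat, (forall j, k j <= m i j) /\ c' = topple_by c i k].

Definition add_grain (c : config) (i : V) : config :=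
  fun j => if j == i then (c j).+1 else c j.

(* one step of the Markov chain (positive probability transitions):
   add a grain at a non-sink vertex i (mu_i > 0), then stabilise. *)
Definition chain_step (T : relation config) (c c' : config) : Prop :=
  stable c /\ exists i : V, [/\ i != sink,
     clos_refl_trans config T (add_grain c i) c' & stable c'].

(* recurrent state of the finite chain: every state reachable from c
   can reach c back. *)
Definition recurrent (T : relation config) (c : config) : Prop :=
  stable c /\ forall c', clos_refl_trans config (chain_step T) c c' ->
                         clos_refl_trans config (chain_step T) c' c.

Definition DR := recurrent asm_topple.
Definition SR := recurrent ssm_topple.

Definition minimal_SR (c : config) : Prop :=
  SR c /\ forall c', SR c' -> (forall i, c' i <= c i) -> c' = c.

Definition nonsink_acyclic : Prop :=
  (forall i j : V, i != sink -> j != sink -> m i j <= 1) /\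
  (forall s : seq V, uniq s -> 3 <= size s -> sink \notin s ->
      ~~ cycle adj s).

End Sandpile.

(* Main.v *)
Require Import Defs.
From mathcomp Require Import all_boot.
From Stdlib Require Import Relations FunctionalExtensionality Lia.
From mathcomp Require Import zify.
Set Implicit Arguments. Unset Strict Implicit. Unset Printing Implicit Defensive.

Section S.
Variable n : nat.
Notation V := 'I_n.+1.
Variable m : V -> V -> nat.
Hypothesis msym : forall i j, m i j = m j i.
Hypothesis mloop : forall i, m i i = 0.
Hypothesis mconn : forall i j, connect (adj m) i j.
Notation s0 := (sink n).
Notation dg := (deg m).

Definition cmax : config n := fun u => if u == s0 then 0 else (dg u).-1.

Lemma add_grain_sink (c : config n) i : i != s0 -> add_grain c i s0 = c s0.
Proof. by rewrite /add_grain => /negbTE; rewrite eq_sym => ->. Qed.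

Definition defi (c : config n) := \sum_(u : V) ((dg u).-1 - c u).

Lemma to_cmax T (y : config n) : stable m y ->
  clos_refl_trans _ (chain_step m T) y cmax.
Proof.
have [k Hk] : exists k, defi y <= k by exists (defi y).
elim: k y Hk => [|k IH] y Hk Hy.
  have -> : y = cmax; last exact: rt_refl.
  apply: functional_extensionality => u; rewrite /cmax.
  case: ifP => [/eqP ->|hu]; first by case: Hy.
  have : (dg u).-1 - y u == 0.
    rewrite -leqn0; apply: (leq_trans _ Hk); rewrite /defi (bigD1 u) //= leq_addr //.
  case: Hy => _ /(_ u (negbT hu)) h; rewrite subn_eq0 => h2.
  by apply/eqP; rewrite eqn_leq h2 -ltnS (leq_trans h) // leqSpred.
case: (boolP [exists u, (y u < (dg u).-1) && (u != s0)]) => [/existsP [u Hu]|].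
  case/andP: Hu => Hlt Hns.
  have Hst : stable m (add_grain y u).
    split; first by rewrite add_grain_sink //; case: Hy.
    move=> v Hv; rewrite /add_grain; case: ifP => [/eqP ->|_]; last by case: Hy => _; apply.
    by rewrite -ltn_predRL.
  apply: rt_trans (_ : clos_refl_trans _ _ (add_grain y u) _).
    by apply: rt_step; split => //; exists u; split => //; exact: rt_refl.
  apply: IH => //.
  have : defi (add_grain y u) < defi y.
    rewrite /defi [X in _ < X](bigD1 u) //= [X in X < _](bigD1 u) //=.
    rewrite /add_grain eqxx -addSn leq_add //.
      by rewrite subnS prednK // subn_gt0.
    by apply: eq_leq; apply: eq_bigr => v /negbTE hv; rewrite hv.
  by move=> h; rewrite -ltnS (leq_trans h).
rewrite negb_exists => /forallP H.
have -> : y = cmax; last exact: rt_refl.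
apply: functional_extensionality => u; rewrite /cmax.
case: ifP => [/eqP ->|hu]; first by case: Hy.
have := H u; rewrite hu andbT -leqNgt => h2.
case: Hy => _ /(_ u (negbT hu)) h.
by apply/eqP; rewrite eqn_leq h2 -ltnS (leq_trans h) // leqSpred.
Qed.

Lemma chain_stable T c c' : clos_refl_trans _ (chain_step m T) c c' -> stable m c -> stable m c'.
Proof.
elim => //; first by move=> x y [_ [i [_ _ h]]].
by move=> x y z _ h1 _ h2 /h1 /h2.
Qed.

Lemma rec_of_reach T c : stable m c -> clos_refl_trans _ (chain_step m T) cmax c ->
  recurrent m T c.
Proof.
move=> Hc Hr; split => // c' Hc'.
eapply rt_trans; [apply: to_cmax; exact: (chain_stable Hc' Hc)|exact: Hr].
Qed.

Lemma reach_of_rec T c : recurrent m T c -> clos_refl_trans _ (chain_step m T) cmax c.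
Proof. by case=> Hc H; apply: H; apply: to_cmax. Qed.


Definition nbr (S : {set V}) : {set V} := S :|: [set v | [exists w in S, adj m w v]].
Definition lay k : {set V} := iter k nbr [set s0].

Lemma lay_path p x k : path (adj m) x p -> x \in lay k -> last x p \in lay (k + size p).
Proof.
elim: p x k => [|y p IH] x k /=; first by rewrite addn0.
case/andP=> hxy hp hx; rewrite addnS -addSn; apply: IH => //.
rewrite /lay iterS /nbr inE; apply/orP; right; rewrite inE; apply/existsP; exists x.
by rewrite hx.
Qed.

Lemma reach u : exists k, u \in lay k.
Proof.
have := mconn s0 u; case/connectP=> p hp ->; exists (0 + size p).
by apply: lay_path => //; rewrite /lay /= inE.
Qed.

Definition rank u := ex_minn (reach u).

Lemma rank_le u k : u \in lay k -> rank u <= k.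
Proof. by rewrite /rank; case: ex_minnP => k0 _ H /H. Qed.

Lemma rank_in u : u \in lay (rank u).
Proof. by rewrite /rank; case: ex_minnP. Qed.

Lemma rank_sink : rank s0 = 0.
Proof. by apply/eqP; rewrite -leqn0; apply: rank_le; rewrite /lay /= inE. Qed.

Lemma rank_par u : u != s0 -> exists w, (0 < m u w) && (rank w < rank u).
Proof.
move=> hu; have hk := rank_in u; have hmin := @rank_le u.
move: hk hmin; case: (rank u) => [|k] hk hmin; first by move: hk; rewrite /lay /= inE (negbTE hu).
move: hk; rewrite /lay iterS -/(lay k) /nbr inE; case/orP.
  by move/hmin; rewrite ltnn.
rewrite inE => /existsP [w /andP [hw hwu]]; exists w.
move: hwu; rewrite /adj /= msym => -> /=; rewrite ltnS; exact: rank_le.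
Qed.

Definition par u := odflt s0 [pick w | (0 < m u w) && (rank w < rank u)].

Lemma parP u : u != s0 -> (0 < m u (par u)) && (rank (par u) < rank u).
Proof.
move=> hu; rewrite /par; case: pickP => [w -> //|H].
by case: (rank_par hu) => w; rewrite H.
Qed.

Lemma rank_pos u : u != s0 -> 0 < rank u.
Proof. by case/parP/andP => _; apply: leq_trans. Qed.

Lemma deg_pos u : u != s0 -> 0 < dg u.
Proof.
case/parP/andP => h _; apply: (leq_trans h); rewrite /deg (bigD1 (par u)) //= leq_addr //.
Qed.

Definition orient (o : V -> V -> nat) :=
  [/\ forall u w, u != w -> o u w + o w u = m u w, forall u, o u u = 0 &
      forall u, o s0 u = 0].
Definition inn (o : V -> V -> nat) u := \sum_(w : V) o w u.
Definition outn (o : V -> V -> nat) u := \sum_(w : V) o u w.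

Lemma orient_le o u w : orient o -> o u w <= m u w.
Proof.
case=> h1 h2 _; case: (eqVneq u w) => [->|huw]; first by rewrite h2.
by rewrite -(h1 _ _ huw) leq_addr.
Qed.

Lemma inn_outn o u : orient o -> inn o u + outn o u = dg u.
Proof.
move=> ho; rewrite /inn /outn /deg -big_split /=; apply: eq_bigr => w _.
case: (eqVneq u w) => [->|huw]; first by case: ho => _ -> _; rewrite mloop.
by case: ho => h _ _; rewrite addnC h.
Qed.

Definition borient u w := if (rank w < rank u) || ((rank w == rank u) && (w < u)) then m u w else 0.

Lemma borient_ok : orient borient.
Proof.
split.
- move=> u w huw; rewrite /borient.
  case: (ltngtP (rank w) (rank u)) => h /=.
  + by rewrite addn0.
  + by rewrite add0n msym.
  + case: (ltngtP w u) => h2.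
    * by rewrite addn0.
    * by rewrite add0n msym.
    * by move/val_inj: h2 huw => ->; rewrite eqxx.
- by move=> u; rewrite /borient !ltnn eqxx.
- by move=> u; rewrite /borient rank_sink ltn0 /=; case: eqP => //= _; rewrite ltn0.
Qed.

Lemma borient_out u : u != s0 -> 0 < outn borient u.
Proof.
move=> hu; case/andP: (parP hu) => h1 h2.
rewrite /outn (bigD1 (par u)) //= {1}/borient h2 /=; exact: leq_trans h1 (leq_addr _ _).
Qed.
Lemma rt_inv (A : Type) (R : relation A) (P : A -> Prop) :
  (forall x y, R x y -> P x -> P y) ->
  forall x y, clos_refl_trans _ R x y -> P x -> P y.
Proof. move=> H x y; elim => [a b hab|a|a b c _ h1 _ h2]; [exact: H|done|by move/h1/h2]. Qed.

Lemma chain_inv T (P : config n -> Prop) :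
  (forall x i, i != s0 -> P x -> P (add_grain x i)) ->
  (forall x y, T x y -> P x -> P y) ->
  forall x y, clos_refl_trans _ (chain_step m T) x y -> P x -> P y.
Proof.
move=> Ha Ht; apply: rt_inv => x y [_ [i [hi hr _]]] hx.
exact: (rt_inv Ht hr (Ha _ _ hi hx)).
Qed.

Definition IO (x : config n) :=
  exists o, orient o /\ forall u, u != s0 -> inn o u <= x u.

Lemma IO_add x i : i != s0 -> IO x -> IO (add_grain x i).
Proof.
move=> _ [o [ho h]]; exists o; split => // u hu; apply: (leq_trans (h u hu)).
by rewrite /add_grain; case: ifP.
Qed.

Lemma sum_split (f : V -> nat) (a : V) : \sum_(w : V) f w = f a + \sum_(w | w != a) f w.
Proof. by rewrite (bigD1 a). Qed.

Lemma IO_ssm x y : ssm_topple m x y -> IO x -> IO y.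
Proof.
case=> i [hi hdeg [k [hk ->]]] [o [ho hin]].
have hsi : (s0 == i) = false by rewrite eq_sym (negbTE hi).
have his : (i == s0) = false by rewrite (negbTE hi).
have hki : k i = 0 by apply/eqP; rewrite -leqn0 -(mloop i) hk.
pose o' a b := if a == i then (if b == s0 then m i s0 else k b)
   else if b == i then (if a == s0 then 0 else m i a - k a) else o a b.
exists o'; split.
  case: ho => h1 h2 h3; split.
  - move=> a b hab; rewrite /o'; case: (eqVneq a i) => [eai|hai].
      subst a; have hbi : (b == i) = false by rewrite eq_sym (negbTE hab).
      rewrite hbi; case: (eqVneq b s0) => [->|hb]; first by rewrite addn0.
      by rewrite subnKC // hk.
    case: (eqVneq b i) => [ebi|hbi]; last by rewrite h1.
    subst b; rewrite ?eqxx; case: (eqVneq a s0) => [->|ha]; first by rewrite add0n msym.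
    by rewrite subnK // msym.
  - move=> a; rewrite /o'; case: (eqVneq a i) => [->|hai]; last by rewrite h2.
    by rewrite (negbTE hi) hki.
  - move=> a; rewrite /o'; have -> : (s0 == i) = false by rewrite eq_sym (negbTE hi).
    by rewrite eqxx; case: ifP => // _; apply: h3.
move=> u hu; rewrite /topple_by (negbTE hu).
case: (eqVneq u i) => [->|hui].
  rewrite ?eqxx /inn.
  have e1 : \sum_(w : V) o' w i = \sum_(w | w != s0) (m i w - k w).
    rewrite (bigD1 s0) //= /o' hsi !eqxx add0n.
    apply: eq_bigr => w hw; rewrite (negbTE hw); case: (eqVneq w i) => [->|//].
    by rewrite his hki mloop.
  have e2 : \sum_(w | w != s0) (m i w - k w) + \sum_(w | w != s0) k w =
            \sum_(w | w != s0) m i w.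
    by rewrite -big_split /=; apply: eq_bigr => w _; rewrite subnK.
  have e3 := sum_split (m i) s0.
  have e4 := sum_split k s0.
  have e5 := hk s0.
  move: hdeg; rewrite /deg e1.
  move: e2 e3 e4 e5; rewrite /deg.
  set A := \sum_(w | w != s0) (m i w - k w).
  set B := \sum_(w | w != s0) k w.
  set C := \sum_(w | w != s0) m i w.
  move=> e2 -> -> e5 hd; rewrite -e2 in hd.
  lia.

rewrite /inn (bigD1 i) //= /o' eqxx (negbTE hu) (negbTE hui).
have -> : \sum_(w | w != i) (if w == i then k u else o w u) = \sum_(w | w != i) o w u.
  by apply: eq_bigr => w /negbTE ->.
have := hin u hu; rewrite /inn (bigD1 i) //= => h.
rewrite addnC leq_add //; apply: leq_trans h; exact: leq_addl.
Qed.

Lemma IO_cmax : IO cmax.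
Proof.
exists borient; split; first exact: borient_ok.
move=> u hu; rewrite /cmax (negbTE hu) -(inn_outn u borient_ok).
have := borient_out hu; case: (outn borient u) => // k _; rewrite addnS /=; exact: leq_addr.
Qed.

Lemma SR_IO c : SR m c -> IO c.
Proof.
move/reach_of_rec => h; apply: (chain_inv _ _ h IO_cmax); first exact: IO_add.
exact: IO_ssm.
Qed.
Definition addc (x : config n) (e : V -> nat) : config n := fun u => x u + e u.
Definition dlt (a : V) : V -> nat := fun w => if w == a then 1 else 0.

Lemma addc0 x : addc x (fun _ => 0) = x.
Proof. by apply: functional_extensionality => u; rewrite /addc addn0. Qed.

Lemma topple_addc x i k f : \sum_(l : V) k l <= x i -> f s0 = 0 ->
  topple_by (addc x f) i k = addc (topple_by x i k) f.
Proof.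
move=> h hf; apply: functional_extensionality => u; rewrite /topple_by /addc.
case: ifP => [/eqP ->|_]; first by rewrite hf.
by case: ifP => [/eqP ->|//]; lia.
Qed.

Lemma ssm_addc x y f : f s0 = 0 -> ssm_topple m x y -> ssm_topple m (addc x f) (addc y f).
Proof.
move=> hf [i [hi hd [k [hk ->]]]]; exists i; split => //.
  by apply: leq_trans hd _; rewrite /addc leq_addr.
exists k; split => //; rewrite topple_addc //; apply: leq_trans hd.
by rewrite /deg; apply: leq_sum => l _; apply: hk.
Qed.

Lemma rt_addc (T : relation (config n)) f :
  (forall x y, T x y -> T (addc x f) (addc y f)) ->
  forall x y, clos_refl_trans _ T x y -> clos_refl_trans _ T (addc x f) (addc y f).
Proof.
move=> H x y; elim => [a b /H|a|a b c _ h1 _ h2]; [exact: rt_step|exact: rt_refl|].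
exact: rt_trans h1 h2.
Qed.

Lemma addcA x e f : addc (addc x e) f = addc x (fun w => e w + f w).
Proof. by apply: functional_extensionality => u; rewrite /addc addnA. Qed.

Section Route.
Variable U : {set V}.
Hypothesis hU0 : s0 \notin U.
Hypothesis hUp : forall u, u \in U -> (par u \in U) || (par u == s0).
Variable z : config n.
Hypothesis hz0 : z s0 = 0.
Hypothesis hzU : forall u, u \in U -> z u = (dg u).-1.

Lemma route_one u : u \in U -> clos_refl_trans _ (ssm_topple m) (addc z (dlt u)) z.
Proof.
have [k hk] : exists k, rank u <= k by exists (rank u).
elim: k u hk => [|k IH] u hk hu.
  have hu0 : u != s0 by apply: contraNneq hU0 => <-.
  by move: (rank_pos hu0); rewrite leqn0 in hk; rewrite (eqP hk).
have hu0 : u != s0 by apply: contraNneq hU0 => <-.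
case/andP: (parP hu0) => hm hr.
pose k1 := dlt (par u).
have hstep : ssm_topple m (addc z (dlt u))
   (if par u == s0 then z else addc z (dlt (par u))).
  exists u; split => //.
    by rewrite /addc /dlt eqxx hzU // addn1 prednK // deg_pos.
  exists k1; split.
    by move=> w; rewrite /k1 /dlt; case: eqP => [->|]. 
  apply: functional_extensionality => w; rewrite /topple_by /addc.
  have hs : \sum_(l : V) k1 l = 1.
    by rewrite /k1 /dlt (bigD1 (par u)) //= eqxx big1 // => l /negbTE ->.
  rewrite hs.
  case: (eqVneq w s0) => [->|hw].
    by case: eqP => [//|hp]; rewrite hz0 /dlt; case: eqP => // h; case: hp.
  case: (eqVneq w u) => [->|hwu].
    have hpu : (u == par u) = false.
      by apply/negbTE/eqP => e; move: hr; rewrite -e ltnn.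
    by rewrite /dlt eqxx addnK; case: ifP => // _; rewrite hpu addn0.
  rewrite /dlt (negbTE hwu) /k1 /dlt addn0.
  case: (eqVneq (par u) s0) => [hp|hp].
    by rewrite hp (negbTE hw) addn0.
  by [].
apply: rt_trans (rt_step _ _ _ _ hstep) _.
case: (eqVneq (par u) s0) => [_|hp] /=; first exact: rt_refl.
apply: IH; last by move: (hUp hu); rewrite (negbTE hp) orbF.
by rewrite -ltnS (leq_trans hr).
Qed.

Lemma route (e : V -> nat) : (forall u, u \notin U -> e u = 0) ->
  clos_refl_trans _ (ssm_topple m) (addc z e) z.
Proof.
have [N hN] : exists N, \sum_(u : V) e u <= N by exists (\sum_(u : V) e u).
elim: N e hN => [|N IH] e hN he.
  have -> : e = fun _ => 0.
    apply: functional_extensionality => u; apply/eqP; rewrite -leqn0.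
    by apply: leq_trans hN; rewrite (bigD1 u) //= leq_addr.
  rewrite addc0; exact: rt_refl.
case: (boolP [exists u, 0 < e u]) => [/existsP [u hu]|]; last first.
  rewrite negb_exists => /forallP H.
  have -> : e = fun _ => 0.
    by apply: functional_extensionality => u; have := H u; rewrite lt0n negbK => /eqP.
  rewrite addc0; exact: rt_refl.
have huU : u \in U by apply: contraTT hu => /he ->.
pose e' w := if w == u then (e u).-1 else e w.
have he' : e = fun w => e' w + dlt u w.
  apply: functional_extensionality => w; rewrite /e' /dlt; case: eqP => [->|].
    by rewrite addn1 prednK.
  by rewrite addn0.
have hs0 : e' s0 = 0.
  by rewrite /e'; case: ifP => [/eqP <-|_]; rewrite he // hU0.
rewrite he' -addcA.
have hzs : (addc z e') s0 = 0 by rewrite /addc hz0 hs0.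
apply: rt_trans (_ : clos_refl_trans _ _ (addc (addc z e') (dlt u)) (addc z e')) _.
  rewrite [addc (addc z e') _]addcA.
  have -> : (fun w => e' w + dlt u w) = (fun w => dlt u w + e' w).
    by apply: functional_extensionality => w; rewrite addnC.
  rewrite -addcA; apply: rt_addc; first by move=> x y; apply: ssm_addc.
  exact: route_one.
apply: IH.
  move: hN; rewrite he' big_split /= => h.
  have : 0 < \sum_(w : V) dlt u w by rewrite (bigD1 u) //= /dlt eqxx.
  by move=> h2; rewrite -ltnS (leq_trans _ h) // -addn1 leq_add2l.
by move=> w hw; rewrite /e'; case: ifP => [/eqP hwu|_]; [by move: hw; rewrite hwu huU|exact: he].
Qed.
End Route.
Section SSMsuff.
Variable o : V -> V -> nat.
Hypothesis ho : orient o.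
Hypothesis hout : forall u, u != s0 -> 0 < outn o u.

Definition incfg : config n := fun u => if u == s0 then 0 else inn o u.

Lemma inn_lt u : u != s0 -> inn o u < dg u.
Proof. by move/hout => h; rewrite -(inn_outn u ho) -addn1 leq_add2l. Qed.

Definition st (Q : {set V}) : config n := fun u =>
  if u == s0 then 0 else if u \in Q then \sum_(w in Q) o w u else (dg u).-1.

Lemma st_stable Q : stable m (st Q).
Proof.
split; first by rewrite /st eqxx.
move=> u hu; rewrite /st (negbTE hu); case: ifP => _.
  apply: leq_ltn_trans (inn_lt hu); rewrite /inn [X in _ <= X](bigID (fun w => w \in Q)) /=.
  exact: leq_addr.
by rewrite prednK // deg_pos.
Qed.

Lemma st_step (Q : {set V}) v : s0 \notin Q -> v \notin Q -> v != s0 ->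
  (forall u, u != s0 -> u \notin Q -> u != v -> (par u \notin Q) && (par u != v)) ->
  chain_step m (ssm_topple m) (st Q) (st (v |: Q)).
Proof.
move=> hQ hvQ hv hpar; split; first exact: st_stable.
exists v; split => //; last exact: st_stable.
pose Q' := v |: Q.
pose k w := if w \in Q then o v w else m v w.
pose U := [set u | (u != s0) && (u \notin Q')].
pose e w := if w \in U then m v w else 0.
have hsumk : \sum_(w : V) k w + \sum_(w in Q) o w v = dg v.
  rewrite /deg (bigID (fun w => w \in Q)) /= [X in _ = X](bigID (fun w => w \in Q)) /=.
  rewrite addnAC -big_split /=; congr (_ + _).
    apply: eq_bigr => w hw; rewrite /k hw; case: ho => h1 _ _; apply: h1.
    by apply: contraNneq hvQ => ->.
  by apply: eq_bigr => w /negbTE hw; rewrite /k hw.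
have hdv : 0 < dg v by apply: deg_pos.
have htop : ssm_topple m (add_grain (st Q) v) (addc (st Q') e).
  exists v; split => //.
    by rewrite /add_grain eqxx /st (negbTE hv) (negbTE hvQ) prednK.
  exists k; split.
    by move=> w; rewrite /k; case: ifP => // _; apply: orient_le.
  apply: functional_extensionality => u; rewrite /topple_by /addc /e /st /add_grain.
  case: (eqVneq u s0) => [->|hu]; first by rewrite inE eqxx.
  case: (eqVneq u v) => [->|huv].
    rewrite (negbTE hvQ) inE (negbTE hv) inE eqxx /= mloop if_same addn0 prednK //.
    rewrite -hsumk addKn /Q' (big_setU1 _ hvQ) /=; case: ho => _ -> _; by [].
  rewrite /Q' in_setU1 (negbTE huv) /= inE (negbTE hu) /=.
  case: ifP => huQ /=.
    by rewrite /Q' in_setU1 (negbTE huv) huQ /= addn0 (big_setU1 _ hvQ) /= addnC /k huQ.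
  by rewrite /Q' in_setU1 (negbTE huv) huQ /k huQ.
apply: rt_trans (rt_step _ _ _ _ htop) _.
apply: (route (U := U)).
- by rewrite inE eqxx.
- move=> u; rewrite inE => /andP [hu]; rewrite /Q' in_setU1 negb_or => /andP [huv huQ].
  case/andP: (hpar u hu huQ huv) => h1 h2.
  case: (eqVneq (par u) s0) => [->|hp]; first by rewrite orbT.
  by rewrite inE hp /Q' in_setU1 negb_or h1 h2.
- by rewrite /st eqxx.
- move=> u; rewrite inE => /andP [hu huQ]; rewrite /st (negbTE hu) (negbTE huQ) //.
- by move=> u; rewrite /e => /negbTE ->.
Qed.

Lemma st_full (Q : {set V}) : s0 \notin Q -> (forall u, u != s0 -> u \in Q) -> st Q = incfg.
Proof.
move=> hQ hall; apply: functional_extensionality => u; rewrite /st /incfg.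
case: ifP => // /negbT hu; rewrite hall // /inn [X in _ = X](bigID (fun w => w \in Q)) /=.
have -> : \sum_(w | w \notin Q) o w u = 0.
  rewrite big1 // => w hw; have -> : w = s0.
    by apply/eqP; apply: contraNT hw => /hall.
  by case: ho.
by rewrite addn0.
Qed.

Lemma st_reach k (Q : {set V}) : s0 \notin Q -> #|[set u | (u != s0) && (u \notin Q)]| = k ->
  (forall q u, q \in Q -> u != s0 -> u \notin Q -> rank u <= rank q) ->
  clos_refl_trans _ (chain_step m (ssm_topple m)) (st Q) incfg.
Proof.
elim: k Q => [|k IH] Q hQ hk hinv.
  rewrite st_full //; first exact: rt_refl.
  move=> u hu; apply: contraT => huQ.
  by move/eqP: hk; rewrite cards_eq0 => /eqP/setP/(_ u); rewrite !inE hu huQ.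
have [u0 hu0] : exists u0, u0 \in [set u | (u != s0) && (u \notin Q)].
  by apply/set0Pn; rewrite -card_gt0 hk.
rewrite inE in hu0.
case: (@arg_maxnP _ u0 (fun u => (u != s0) && (u \notin Q)) rank hu0) => v /andP [hv hvQ] hmax.
apply: rt_trans (rt_step _ _ _ _ (st_step hQ hvQ hv _)) _.
  move=> u hu huQ huv; case/andP: (parP hu) => _ hr.
  have hru : rank u <= rank v by apply: hmax; rewrite hu huQ.
  apply/andP; split.
    apply/negP => hp; have := hinv _ _ hp hu huQ; rewrite leqNgt hr //.
  by apply/eqP => e; move: hr; rewrite e ltnNge hru.
apply: IH.
- by rewrite in_setU1 negb_or hQ eq_sym hv.
- apply/eqP; rewrite -eqSS -hk.
  have -> : [set u | (u != s0) && (u \notin Q)] = v |: [set u | (u != s0) && (u \notin v |: Q)].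
    apply/setP => u; rewrite !inE negb_or; case: (eqVneq u v) => [->|] //=.
    by rewrite hv hvQ.
  rewrite cardsU1 inE in_setU1 eqxx /= andbF /=; by [].
- move=> q u; rewrite !in_setU1 => /orP [/eqP ->|hq] hu; rewrite negb_or => /andP [huv huQ].
    by apply: hmax; rewrite hu huQ.
  exact: hinv.
Qed.

Lemma SR_incfg : SR m incfg.
Proof.
apply: rec_of_reach.
  split; first by rewrite /incfg eqxx.
  by move=> u hu; rewrite /incfg (negbTE hu); apply: inn_lt.
have -> : cmax = st set0.
  apply: functional_extensionality => u; rewrite /cmax /st inE; by [].
apply: (st_reach (k := #|[set u | (u != s0) && (u \notin set0)]|)) => //.
  by rewrite inE.
by move=> q u; rewrite inE.
Qed.
End SSMsuff.
Lemma sum_inn_outn o : orient o -> \sum_(u : V) inn o u = \sum_(u : V) outn o u.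
Proof. by move=> _; rewrite /inn /outn exchange_big. Qed.

Lemma sum_inn_eq o o' : orient o -> orient o' ->
  \sum_(u : V) inn o u = \sum_(u : V) inn o' u.
Proof.
move=> ho ho'.
have h1 : \sum_(u : V) inn o u + \sum_(u : V) inn o u = \sum_(u : V) dg u.
  by rewrite {2}sum_inn_outn // -big_split /=; apply: eq_bigr => u _; apply: inn_outn.
have h2 : \sum_(u : V) inn o' u + \sum_(u : V) inn o' u = \sum_(u : V) dg u.
  by rewrite {2}sum_inn_outn // -big_split /=; apply: eq_bigr => u _; apply: inn_outn.
lia.
Qed.

Lemma inn_sink o : orient o -> inn o s0 = \sum_(w : V) m w s0.
Proof.
move=> ho; rewrite /inn; apply: eq_bigr => w _.
case: (eqVneq w s0) => [->|hw]; first by case: ho => _ -> _; rewrite mloop.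
by case: ho => h1 _ h3; rewrite -(h1 _ _ hw) h3 addn0.
Qed.

Lemma sum_inn_ns o o' : orient o -> orient o' ->
  \sum_(u | u != s0) inn o u = \sum_(u | u != s0) inn o' u.
Proof.
move=> ho ho'; have := sum_inn_eq ho ho'.
by rewrite (bigD1 s0) //= (bigD1 s0 (P := xpredT)) //= !inn_sink //; move/addnI.
Qed.

Lemma sum_squeeze (P : pred V) (a b : V -> nat) :
  (forall u, P u -> a u <= b u) -> \sum_(u | P u) b u <= \sum_(u | P u) a u ->
  forall u, P u -> a u = b u.
Proof.
move=> hab hs u hu; apply/eqP; rewrite eqn_leq hab //=; apply: contraLR hs; rewrite -!ltnNge => hlt.
rewrite (bigD1 u) //= [X in _ < X](bigD1 u) //=.
apply: leq_trans (_ : (a u).+1 + \sum_(i | P i && (i != u)) a i <= _).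
  by rewrite addSn.
by rewrite leq_add // leq_sum // => i /andP [hi _]; apply: hab.
Qed.

Lemma minimal_incfg o (ho : orient o) (hout : forall u, u != s0 -> 0 < outn o u) :
  minimal_SR m (incfg o).
Proof.
split; first exact: SR_incfg.
move=> c' /SR_IO [o' [ho' hin]] hle.
have hc0 : c' s0 = 0 by have := hle s0; rewrite /incfg eqxx leqn0 => /eqP.
have key : forall u, u != s0 -> c' u = inn o u.
  have H := @sum_squeeze (fun u => u != s0) c' (inn o).
  move=> u hu; apply: H => //.
    by move=> w hw; have := hle w; rewrite /incfg (negbTE hw).
  rewrite (sum_inn_ns ho ho'); apply: leq_sum => w hw; exact: hin.
apply: functional_extensionality => u; rewrite /incfg.
by case: eqP => [->|/eqP hu]; [exact: hc0|exact: key].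
Qed.

Definition Dhar (x : config n) := forall A : {set V}, s0 \notin A -> A != set0 ->
  exists2 u, u \in A & \sum_(w in A) m u w <= x u.

Lemma Dhar_add x i : i != s0 -> Dhar x -> Dhar (add_grain x i).
Proof.
move=> _ H A h1 h2; case: (H A h1 h2) => u hu hle; exists u => //; apply: leq_trans hle _.
by rewrite /add_grain; case: ifP.
Qed.

Lemma Dhar_asm x y : asm_topple m x y -> Dhar x -> Dhar y.
Proof.
case=> i [hi hd ->] H A h1 h2.
have hsA : forall u, u \in A -> u != s0 by move=> u hu; apply: contraNneq h1 => <-.
case: (boolP (i \in A)) => hiA; last first.
  case: (H A h1 h2) => u hu hle; exists u => //; apply: leq_trans hle _.
  rewrite /topple_by (negbTE (hsA _ hu)); case: eqP => [e|_]; last exact: leq_addr.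
  by move: hiA; rewrite -e hu.
case: (eqVneq (A :\ i) set0) => [e|hne].
  exists i => //; rewrite big1 // => w hw; case: (eqVneq w i) => [->|hwi]; first exact: mloop.
  have : w \in A :\ i by rewrite in_setD1 hwi hw.
  by rewrite e inE.
case: (H (A :\ i) _ hne) => [|u]; first by rewrite in_setD1 negb_and h1 orbT.
rewrite in_setD1 => /andP [hui huA] hle; exists u => //.
rewrite /topple_by (negbTE (hsA _ huA)) (negbTE hui) (big_setD1 i hiA) /= addnC msym.
by rewrite leq_add2r.
Qed.

Lemma exit_edge (A : {set V}) a b : connect (adj m) a b -> a \in A -> b \notin A ->
  exists u w, [/\ u \in A, w \notin A & 0 < m u w].
Proof.
case/connectP => p; elim: p a => [|c p IH] a /=; first by move=> _ -> ->.
case/andP => hac hp hb ha; case: (boolP (c \in A)) => hc.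
  exact: IH hp hb hc.
by exists a, c.
Qed.

Lemma Dhar_cmax : Dhar cmax.
Proof.
move=> A h1 /set0Pn [a ha].
case: (exit_edge (mconn a s0) ha h1) => u [w [hu hw hm]]; exists u => //.
have hu0 : u != s0 by apply: contraNneq h1 => <-.
rewrite /cmax (negbTE hu0) -ltnS prednK ?deg_pos //.
rewrite /deg [X in _ < X](bigID (fun v => v \in A)) /= -[X in X < _]addn0 ltn_add2l.
by apply: leq_trans hm _; rewrite (bigD1 w) //= leq_addr.
Qed.

Lemma DR_Dhar c : DR m c -> Dhar c.
Proof.
move/reach_of_rec => h; apply: (chain_inv _ _ h Dhar_cmax); first exact: Dhar_add.
exact: Dhar_asm.
Qed.

Lemma not_Dhar_cyc o (C : {set V}) : orient o -> C != set0 -> s0 \notin C ->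
  (forall u, u \in C -> exists2 w, w \in C & 0 < o u w) -> ~ Dhar (incfg o).
Proof.
move=> ho hC hC0 hcyc HD.
pose da : rel V := fun a b => 0 < o a b.
pose A := [set v | [exists c in C, connect da v c]].
have hA0 : s0 \notin A.
  rewrite inE; apply/existsP => [[c /andP [hc]]] /connectP [p].
  case: p => [_ /= e|d p /= /andP [hd _] _]; first by move: hc; rewrite e (negbTE hC0).
  by move: hd; rewrite /da; case: ho => _ _ ->.
have hAne : A != set0.
  case/set0Pn: hC => c hc; apply/set0Pn; exists c; rewrite inE; apply/existsP; exists c.
  by rewrite hc connect0.
case: (HD A hA0 hAne) => u huA; apply/negP; rewrite -ltnNge.
have hu0 : u != s0 by apply: contraNneq hA0 => <-.
rewrite /incfg (negbTE hu0).
have hin : inn o u = \sum_(w in A) o w u.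
  rewrite /inn [X in X = _](bigID (fun w => w \in A)) /= [X in _ + X]big1 ?addn0 // => w hw.
  apply/eqP; rewrite -leqn0 leqNgt; apply: contra hw => hwu; rewrite inE.
  move: huA; rewrite inE => /existsP [c /andP [hc hconn]]; apply/existsP; exists c.
  by rewrite hc (connect_trans _ hconn) // connect1.
have [w hwA hwo] : exists2 w, w \in A & 0 < o u w.
  move: huA; rewrite inE => /existsP [c /andP [hc /connectP [p]]].
  case: p => [_ e|d p /= /andP [hd hp] hl].
    by subst c; case: (hcyc u hc) => w hw hwo; exists w => //; rewrite inE; apply/existsP; exists w; rewrite hw connect0.
  exists d => //; rewrite inE; apply/existsP; exists c; rewrite hc; apply/connectP; exists p => //.
rewrite hin.
have h1 : \sum_(x in A) (o x u + o u x) <= \sum_(x in A) m u x.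
  apply: leq_sum => x _; case: (eqVneq x u) => [->|hxu]; first by case: ho => _ -> _.
  by case: ho => hh _ _; rewrite (hh _ _ hxu) msym.
have h2 : 0 < \sum_(x in A) o u x by rewrite (bigD1 w hwA) /= ltn_addr.
rewrite big_split /= in h1; apply: leq_trans h1; by rewrite -addn1 leq_add2l.
Qed.
Lemma IO_Dhar c : nonsink_acyclic m -> IO c -> Dhar c.
Proof.
move=> [hsimp hcyc] [o [ho hin]] A hA0 hAne.
have hsA : forall u, u \in A -> u != s0 by move=> u hu; apply: contraNneq hA0 => <-.
case: (boolP [exists u in A, \sum_(w in A) m u w <= c u]) => [/exists_inP [u hu hle]|].
  by exists u.
rewrite negb_exists_in => /forall_inP Hn; exfalso.
have hout : forall u, u \in A -> exists w, (w \in A) && (0 < o u w).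
  move=> u hu; have := Hn u hu; rewrite -ltnNge => hlt.
  have h1 : \sum_(w in A) o w u <= c u.
    apply: leq_trans (hin u (hsA _ hu)); rewrite /inn [X in _ <= X](bigID (fun w => w \in A)) /=.
    exact: leq_addr.
  have h2 : \sum_(w in A) m u w = \sum_(w in A) o w u + \sum_(w in A) o u w.
    rewrite -big_split /=; apply: eq_bigr => w _; case: (eqVneq w u) => [->|hwu].
      by case: ho => _ -> _; rewrite mloop.
    by case: ho => hh _ _; rewrite (hh _ _ hwu) msym.
  have : 0 < \sum_(w in A) o u w by lia.
  case: (boolP [exists w in A, 0 < o u w]) => [/exists_inP [w hw hwo] _|]; first by exists w; rewrite hw.
  rewrite negb_exists_in => /forall_inP H; rewrite big1 // => w /H.
  by rewrite -leqNgt leqn0 => /eqP.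
pose f u := if u \in A then odflt u [pick w | (w \in A) && (0 < o u w)] else u.
have hfA : forall u, u \in A -> (f u \in A) && (0 < o u (f u)).
  move=> u hu; rewrite /f hu; case: pickP => [w //|H].
  by case: (hout u hu) => w; rewrite H.
have hiter : forall j u, u \in A -> iter j f u \in A.
  by elim=> [//|j IH] u hu; rewrite iterS; case/andP: (hfA _ (IH u hu)).
case/set0Pn: hAne => a ha.
have := looping_order f a; rewrite /looping => /trajectP [i hi e].
pose y := iter i f a.
have hyA : y \in A by apply: hiter.
have hper : iter (fingraph.order f a - i) f y = y.
  by rewrite /y -iterD subnK ?(ltnW hi).
have hcy : fcycle f (orbit f y).
  apply/(orbitPcycle 0 3); exists (fingraph.order f a - i).-1; rewrite prednK ?subn_gt0 //.
have huq := orbit_uniq f y.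
have hallA : all (fun x => x \in A) (orbit f y).
  by apply/allP => x /trajectP [j _ ->]; apply: hiter.
have hfo : forall x, x \in A -> 0 < o x (f x) by move=> x /hfA /andP [].
have hfin : forall x, x \in A -> f x \in A by move=> x /hfA /andP [].
have hyin := in_orbit f y.
move: hcy huq hallA hyin; case: (orbit f y) => [|y0 [|y1 [|y2 s]]] hcy huq hallA hyin //.
- move: hcy => /= /andP [/eqP hf _].
  move: hallA => /= /andP [h0 _]; move: (hfo _ h0); rewrite hf.
  by case: ho => _ -> _.
- move: hcy => /= /and3P [/eqP h01 /eqP h10 _].
  move: hallA => /= /and3P [h0 h1 _].
  have hne : y0 != y1 by move: huq => /= /andP []; rewrite inE.
  have := hsimp _ _ (hsA _ h0) (hsA _ h1).
  case: ho => hh _ _; rewrite -(hh _ _ hne).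
  have := hfo _ h0; have := hfo _ h1; rewrite h01 h10; lia.
- apply: (negP (hcyc _ huq _ _)) => //.
    apply/negP => hs; move: hallA => /allP /(_ _ hs); by rewrite (negbTE hA0).
  apply: (sub_in_cycle (P := fun x => x \in A) _ hallA hcy).
  move=> x z hx _ /eqP <-; rewrite /adj /=.
  apply: leq_trans (hfo _ hx) _; exact: orient_le.
Qed.
Definition fire (x : config n) v := topple_by x v (m v).

Fixpoint runs (x : config n) (s : seq V) (y : config n) : Prop :=
  match s with
  | [::] => x = y
  | v :: s' => [/\ v != s0, dg v <= x v & runs (fire x v) s' y]
  end.

Definition sst (y : config n) := forall u, u != s0 -> y u < dg u.

Lemma runs_rt x s y : runs x s y -> clos_refl_trans _ (asm_topple m) x y.
Proof.
elim: s x => [|v s IH] x /=; first by move->; exact: rt_refl.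
case=> hv hd hr; apply: rt_trans (rt_step _ _ _ _ _) (IH _ hr).
by exists v; split.
Qed.

Lemma runs_rcons x s y v : runs x s y -> v != s0 -> dg v <= y v -> runs x (rcons s v) (fire y v).
Proof. by elim: s x => [|w s IH] x /=; [move=> -> hv hd; split|case=> h1 h2 h3 hv hd; split => //; apply: IH]. Qed.

Lemma fire_comm x v w : v != w -> v != s0 -> w != s0 -> dg v <= x v -> dg w <= x w ->
  fire (fire x v) w = fire (fire x w) v.
Proof.
move=> hvw hv hw hdv hdw; apply: functional_extensionality => u; rewrite /fire /topple_by.
case: (eqVneq u s0) => [_|hu] //.
rewrite -/(deg m w) -/(deg m v).
have hv' : (v == s0) = false by apply: negbTE.
have hw' : (w == s0) = false by apply: negbTE.
have hvw' : (v == w) = false by apply: negbTE.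
have hwv' : (w == v) = false by rewrite eq_sym hvw'.
rewrite hv' hw' hvw' hwv'.
case: (eqVneq u w) => [->|huw]; first by rewrite hwv'; lia.
case: (eqVneq u v) => [->|huv]; first by lia.
lia.
Qed.

Lemma fire_ge x v u : u != v -> u != s0 -> x u <= fire x v u.
Proof.
by move=> huv hu; rewrite /fire /topple_by (negbTE hu) (negbTE huv) leq_addr.
Qed.

Lemma LC1 s x y v : runs x s y -> sst y -> v != s0 -> dg v <= x v ->
  exists2 s', runs (fire x v) s' y & (size s').+1 = size s.
Proof.
elim: s x => [|w s IH] x /=.
  by move=> -> hy hv hd; have := hy v hv; rewrite ltnNge hd.
case=> hw hdw hr hy hv hdv.
case: (eqVneq w v) => [e|hwv]; first by subst w; exists s.
have hdv' : dg v <= fire x w v.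
  by apply: leq_trans hdv (fire_ge _ _ _); rewrite // eq_sym.
case: (IH _ hr hy hv hdv') => s' hs' hsz.
exists (w :: s'); last by rewrite /= hsz.
split => //; first exact: leq_trans hdw (fire_ge _ hwv hw).
by rewrite fire_comm // eq_sym.
Qed.

Lemma LCstar t x z s y : runs x s y -> sst y -> runs x t z ->
  exists2 s', runs z s' y & size t + size s' = size s.
Proof.
elim: t x s => [|v t IH] x s /=; first by move=> hr hy <-; exists s.
move=> hr hy [hv hd ht].
case: (LC1 hr hy hv hd) => s1 hs1 hsz1.
case: (IH _ _ hs1 hy ht) => s2 hs2 hsz2; exists s2 => //; lia.
Qed.

Lemma runs_addc y s z f : f s0 = 0 -> runs y s z -> runs (addc y f) s (addc z f).
Proof.
move=> hf; elim: s y => [|v s IH] y /=; first by move->.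
case=> hv hd hr; split => //.
  by apply: leq_trans hd _; rewrite /addc leq_addr.
rewrite /fire topple_addc //; exact: IH.
Qed.

Lemma runs_sink x s y : runs x s y -> x s0 = 0 -> y s0 = 0.
Proof.
elim: s x => [|v s IH] x /=; first by move->.
by case=> _ _ hr _; apply: (IH _ hr); rewrite /fire /topple_by eqxx.
Qed.

Lemma term y f s sg : f s0 = 0 -> runs (addc y f) s sg -> sst sg ->
  exists t z, runs y t z /\ sst z.
Proof.
move=> hf hr hs.
have hb : forall t z, runs y t z -> size t <= size s.
  move=> t z hyz; case: (LCstar hr hs (runs_addc hf hyz)) => s' _ <-; exact: leq_addr.
suff H : forall k t z, runs y t z -> size s - size t <= k -> exists t z, runs y t z /\ sst z.
  by apply: (H (size s) [::] y) => //; rewrite subn0.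
elim=> [|k IH] t z hyz hk.
  case: (boolP [forall u, (u != s0) ==> (z u < dg u)]) => [/forallP H|].
    by exists t, z; split => // u hu; move: (H u); rewrite hu.
  rewrite negb_forall => /existsP [u]; rewrite negb_imply -leqNgt => /andP [hu hd].
  have := hb _ _ (runs_rcons hyz hu hd); rewrite size_rcons; lia.
case: (boolP [forall u, (u != s0) ==> (z u < dg u)]) => [/forallP H|].
  by exists t, z; split => // u hu; move: (H u); rewrite hu.
rewrite negb_forall => /existsP [u]; rewrite negb_imply -leqNgt => /andP [hu hd].
apply: (IH _ _ (runs_rcons hyz hu hd)); rewrite size_rcons.
have := hb _ _ (runs_rcons hyz hu hd); rewrite size_rcons; lia.
Qed.
Lemma runs_cat x s1 y s2 z : runs x s1 y -> runs y s2 z -> runs x (s1 ++ s2) z.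
Proof. by elim: s1 x => [|v s IH] x /=; [move=> -> |case=> h1 h2 h3 h4; split => //; apply: IH]. Qed.

Lemma stable_sst x : stable m x -> sst x.
Proof. by case. Qed.

Lemma runs_stable x s y : stable m x -> runs x s y -> x = y.
Proof.
case: s => [|v s] /=; first by [].
by move=> [_ H] [hv hd _]; have := H v hv; rewrite ltnNge hd.
Qed.

Lemma split_chain N x (a : V -> nat) s sg : \sum_(u : V) a u <= N -> stable m x -> a s0 = 0 ->
  runs (addc x a) s sg -> stable m sg -> clos_refl_trans _ (chain_step m (asm_topple m)) x sg.
Proof.
elim: N x a s => [|N IH] x a s hN hx ha hr hsg.
  have e : a = fun _ => 0.
    apply: functional_extensionality => u; apply/eqP; rewrite -leqn0.
    by apply: leq_trans hN; rewrite (bigD1 u) //= leq_addr.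
  by move: hr; rewrite e addc0 => /(runs_stable hx) ->; exact: rt_refl.
case: (boolP [exists u, 0 < a u]) => [/existsP [v hv]|]; last first.
  rewrite negb_exists => /forallP H.
  have e : a = fun _ => 0.
    by apply: functional_extensionality => u; have := H u; rewrite lt0n negbK => /eqP.
  by move: hr; rewrite e addc0 => /(runs_stable hx) ->; exact: rt_refl.
have hv0 : v != s0 by apply: contraTneq hv => ->; rewrite ha.
pose a' w := if w == v then (a v).-1 else a w.
have ea : addc x a = addc (add_grain x v) a'.
  apply: functional_extensionality => u; rewrite /addc /add_grain /a'.
  by case: eqP => [->|//]; rewrite addSnnS prednK.
have ha' : a' s0 = 0 by rewrite /a' eq_sym (negbTE hv0).
rewrite ea in hr.
case: (term ha' hr (stable_sst hsg)) => t [z [htz hz]].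
have hz0 : z s0 = 0.
  by apply: (runs_sink htz); rewrite add_grain_sink //; case: hx.
have hzs : stable m z by split.
apply: (@rt_trans _ _ x z sg).
  apply: rt_step; split => //; exists v; split => //; exact: runs_rt htz.
case: (LCstar hr (stable_sst hsg) (runs_addc ha' htz)) => s' hs' _.
apply: (IH _ _ _ _ hzs ha' hs' hsg).
have : \sum_(u : V) a u = (\sum_(u : V) a' u).+1.
  rewrite (bigD1 v) //= [X in _ = X.+1](bigD1 v) //= /a' eqxx -addSn prednK //.
  by congr (_ + _); apply: eq_bigr => w /negbTE ->.
lia.
Qed.

Section Burn.
Variable sg : config n.
Hypothesis hsg : stable m sg.
Hypothesis hD : Dhar sg.

Definition beta : V -> nat := fun u => if u == s0 then 0 else m u s0.

Lemma compl_sum (A : {set V}) u (g : V -> nat) : u \in A ->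
  \sum_(w | w \notin A :\ u) g w = g u + \sum_(w | w \notin A) g w.
Proof.
move=> hu; rewrite (bigD1 u) /=; last by rewrite in_setD1 eqxx.
congr (_ + _); apply: eq_bigl => w; rewrite in_setD1 negb_and negbK.
by case: (eqVneq w u) => [->|_] /=; [rewrite hu|rewrite andbT].
Qed.

Lemma burn k (A : {set V}) y : #|A| = k -> s0 \notin A -> y s0 = 0 ->
  (forall u, u != s0 -> y u + (if u \in A then 0 else dg u) = sg u + \sum_(w | w \notin A) m w u) ->
  exists s, runs y s sg.
Proof.
elim: k A y => [|k IH] A y hk hA hy0 hy.
  exists [::] => /=; apply: functional_extensionality => u.
  case: (eqVneq u s0) => [->|hu]; first by rewrite hy0; case: hsg.
  have := hy u hu; move/eqP: hk; rewrite cards_eq0 => /eqP ->; rewrite inE.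
  have -> : \sum_(w | w \notin set0) m w u = dg u.
    by rewrite /deg; apply: eq_big => [w|w _]; rewrite ?inE // msym.
  by move/addIn.
have hne : A != set0 by rewrite -card_gt0 hk.
case: (hD hA hne) => u huA hle.
have hu0 : u != s0 by apply: contraNneq hA => <-.
have hyu : y u = sg u + \sum_(w | w \notin A) m w u by rewrite -hy // huA addn0.
have hdu : dg u <= y u.
  rewrite hyu /deg (bigID (fun w => w \in A)) /= leq_add //.
  by apply: eq_leq; apply: eq_bigr => w _; rewrite msym.
case: (IH (A :\ u) (fire y u)) => //.
- by rewrite (cardsD1 u A) huA in hk; case: hk.
- by rewrite in_setD1 negb_and hA orbT.
- move=> t ht; rewrite compl_sum // /fire /topple_by (negbTE ht).
  case: (eqVneq t u) => [->|htu].
    rewrite in_setD1 eqxx /= mloop add0n -hyu -/(deg m u) subnK //.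
  by rewrite in_setD1 htu /= addnAC (hy t ht) -addnA [_ + m u t]addnC.
move=> s hs; exists (u :: s); split => //.
Qed.

Lemma burn_beta : exists s, runs (addc sg beta) s sg.
Proof.
apply: (burn (A := [set u | u != s0]) (erefl _)).
- by rewrite inE negbK.
- by rewrite /addc /beta eqxx addn0; case: hsg.
move=> u hu; rewrite inE hu addn0 /addc /beta (negbTE hu).
have -> : \sum_(w | w \notin [set u | u != s0]) m w u = m s0 u.
  by apply: big_pred1 => w; rewrite inE negbK.
by rewrite msym.
Qed.

Definition Wset (w : V -> nat) := w s0 = 0 /\ exists s, runs (addc sg w) s sg.

Lemma W0 : Wset (fun _ => 0).
Proof. by split => //; exists [::]; rewrite addc0. Qed.

Lemma Wadd w1 w2 : Wset w1 -> Wset w2 -> Wset (fun u => w1 u + w2 u).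
Proof.
move=> [h1 [s1 hs1]] [h2 [s2 hs2]]; split; first by rewrite h1 h2.
exists (s1 ++ s2); rewrite -addcA; apply: runs_cat hs2; exact: runs_addc.
Qed.

Lemma Wmul k w : Wset w -> Wset (fun u => k * w u).
Proof.
move=> hw; elim: k => [|k IH]; first by have := W0; congr Wset; apply: functional_extensionality.
have := Wadd hw IH; congr Wset; apply: functional_extensionality => u; by rewrite mulSn.
Qed.

Lemma Wbeta : Wset beta.
Proof. by split; [rewrite /beta eqxx|exact: burn_beta]. Qed.

Lemma Wfire w p : Wset w -> p != s0 -> dg p <= w p ->
  Wset (fun u => if u == s0 then 0 else if u == p then w p - dg p else w u + m p u).
Proof.
move=> [hw0 [s hs]] hp hd; split; first by rewrite eqxx.
have hd' : dg p <= addc sg w p by rewrite /addc; apply: leq_trans hd (leq_addl _ _).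
case: (LC1 hs (stable_sst hsg) hp hd') => s' hs' _; exists s'.
suff <- : fire (addc sg w) p = addc sg (fun u => if u == s0 then 0 else if u == p then w p - dg p else w u + m p u) by [].
apply: functional_extensionality => u; rewrite /fire /topple_by /addc.
case: (eqVneq u s0) => [->|hu]; first by case: hsg => ->.
case: (eqVneq u p) => [->|hup]; last by rewrite addnA.
rewrite -/(deg m p); lia.
Qed.

Lemma Wu u : u != s0 -> exists w, Wset w /\ 0 < w u.
Proof.
have [k hk] : exists k, rank u <= k by exists (rank u).
elim: k u hk => [|k IH] u hk hu.
  by move: (rank_pos hu); rewrite leqn0 in hk; rewrite (eqP hk).
case/andP: (parP hu) => hm hr.
case: (eqVneq (par u) s0) => [e|hp].
  by exists beta; split; [exact: Wbeta|rewrite /beta (negbTE hu) -e].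
case: (IH (par u) _ hp) => [|w [hw hwp]]; first by rewrite -ltnS (leq_trans hr).
have hw1 := Wmul (dg (par u)) hw.
have hd : dg (par u) <= dg (par u) * w (par u).
  by rewrite -{1}[dg (par u)]muln1 leq_mul2l hwp orbT.
have hW := Wfire hw1 hp hd.
eexists; split; first exact: hW.
have hup : u != par u by apply/eqP => e; move: hr; rewrite -e ltnn.
by rewrite /= (negbTE hu) (negbTE hup) msym; apply: leq_trans hm (leq_addl _ _).
Qed.

Lemma Wdom (tau : V -> nat) : exists w, Wset w /\ forall u, u != s0 -> tau u <= w u.
Proof.
suff H : forall l : seq V, exists w, Wset w /\ forall u, u \in l -> u != s0 -> tau u <= w u.
  by case: (H (enum V)) => w [hw H']; exists w; split => // u; apply: H'; rewrite mem_enum.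
elim=> [|u l [w [hw hl]]]; first by exists (fun _ => 0); split; [exact: W0|].
case: (eqVneq u s0) => [e|hu].
  exists w; split => // v; rewrite inE => /orP [/eqP -> |]; [by rewrite e eqxx|exact: hl].
case: (Wu hu) => wu [hwu hpos].
exists (fun v => w v + tau u * wu v); split; first exact: Wadd (Wmul _ hwu).
move=> v; rewrite inE => /orP [/eqP -> _|hv hv0].
  by apply: leq_trans (leq_addl _ _); rewrite -{1}[tau u]muln1 leq_mul2l hpos orbT.
by apply: leq_trans (hl v hv hv0) (leq_addr _ _).
Qed.

Lemma Dhar_DR : DR m sg.
Proof.
apply: rec_of_reach => //.
pose tau u := (dg u).-1 - sg u.
case: (Wdom tau) => w [[hw0 [s hs]] hdom].
pose a u := if u == s0 then 0 else w u - tau u.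
have e : addc cmax a = addc sg w.
  apply: functional_extensionality => u; rewrite /addc /cmax /a.
  case: (eqVneq u s0) => [->|hu]; first by rewrite hw0; case: hsg => ->.
  have h1 := hdom u hu; case: hsg => _ /(_ u hu) h2; rewrite /tau in h1 *.
  have h3 := deg_pos hu; lia.
have hcm : stable m cmax.
  split; first by rewrite /cmax eqxx.
  by move=> u hu; rewrite /cmax (negbTE hu) prednK // deg_pos.
have ha0 : a s0 = 0 by rewrite /a; case: eqP.
have hs' : runs (addc cmax a) s sg by rewrite e.
exact: (split_chain (leqnn _) hcm ha0 hs' hsg).
Qed.
End Burn.
Lemma next_next (s : seq V) a : uniq s -> 2 < size s -> a \in s -> next s (next s a) != a.
Proof.
move=> hu hs ha; case: (rot_to ha) => i p e.
have hu' : uniq (a :: p) by rewrite -e rot_uniq.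
have hs' : 2 < size (a :: p) by rewrite -e size_rot.
rewrite -!(next_rot i hu) e.
case: p e hu' hs' => [|b [|c r]] e hu' hs' //.
move: hu' => /= /andP [ha' _].
have hba : (b == a) = false.
  by apply: negbTE; apply: contraNneq ha' => ->; rewrite inE eqxx.
rewrite /next /= eqxx hba eqxx.
by apply: contraNneq ha' => ->; rewrite !inE eqxx orbT.
Qed.

Lemma borient_outn u : u != s0 -> 0 < outn borient u.
Proof. exact: borient_out. Qed.

Lemma iii_i : nonsink_acyclic m -> forall c, SR m c -> DR m c.
Proof.
move=> hna c hc; apply: Dhar_DR; first by case: hc.
exact: IO_Dhar hna (SR_IO hc).
Qed.

Lemma bad_orient o (C : {set V}) : orient o -> (forall u, u != s0 -> 0 < outn o u) ->
  C != set0 -> s0 \notin C ->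
  (forall u, u \in C -> exists2 w, w \in C & 0 < o u w) ->
  (forall c, minimal_SR m c -> DR m c) -> False.
Proof.
move=> ho hout hC hC0 hcyc H.
exact: (not_Dhar_cyc ho hC hC0 hcyc (DR_Dhar (H _ (minimal_incfg ho hout)))).
Qed.

Lemma ii_iii : (forall c, minimal_SR m c -> DR m c) -> nonsink_acyclic m.
Proof.
move=> H; split.
  move=> i j hi hj; rewrite leqNgt; apply/negP => hij.
  have hne : i != j by apply: contraTneq hij => ->; rewrite mloop.
  pose C := [set i; j].
  have hCij : forall a, a \in C -> a = i \/ a = j.
    by move=> a; rewrite !inE => /orP [/eqP ->|/eqP ->]; [left|right].
  pose o a b := if [&& a \in C, b \in C & a != b] then (if a == i then 1 else m i j - 1)
                else borient a b.
  have hji : (j == i) = false by rewrite eq_sym (negbTE hne).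
  have hijC : [&& i \in C, j \in C & i != j] by rewrite !inE !eqxx !orbT.
  have hjiC : [&& j \in C, i \in C & j != i] by rewrite !inE !eqxx !orbT /= eq_sym.
  apply: (@bad_orient o C).
  - case: borient_ok => h1 h2 h3; split.
    + move=> a b hab; rewrite /o.
      case: (boolP ((a \in C) && (b \in C))) => [/andP [ha hb]|hn].
        have hba : b != a by rewrite eq_sym.
        rewrite ha hb hab hba /=.
        case: (hCij _ ha) => ea; case: (hCij _ hb) => eb; subst a b.
        * by move: hab; rewrite eqxx.
        * rewrite eqxx hji; lia.
        * rewrite eqxx hji [m j i]msym; lia.
        * by move: hab; rewrite eqxx.
      have -> : [&& a \in C, b \in C & a != b] = false.
        by apply/negbTE; apply: contra hn => /and3P [-> -> _].
      have -> : [&& b \in C, a \in C & b != a] = false.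
        by apply/negbTE; apply: contra hn => /and3P [-> -> _].
      exact: h1.
    + by move=> a; rewrite /o eqxx !andbF; apply: h2.
    + move=> a; rewrite /o.
      have -> : (s0 \in C) = false by rewrite !inE !(eq_sym s0) (negbTE hi) (negbTE hj).
      exact: h3.
  - move=> u hu; case: (boolP (u \in C)) => huC.
      case: (hCij _ huC) => eu; subst u.
        by rewrite /outn (bigD1 j) //= /o hijC eqxx ltn_addr.
      rewrite /outn (bigD1 i) //= /o hjiC hji ltn_addr //; lia.
    apply: leq_trans (borient_out hu) _; apply: eq_leq; apply: eq_bigr => w _.
    by rewrite /o (negbTE huC).
  - by apply/set0Pn; exists i; rewrite !inE eqxx.
  - by rewrite !inE negb_or !(eq_sym s0) hi hj.
  - move=> u huC; case: (hCij _ huC) => eu; subst u.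
      by exists j; rewrite ?inE ?eqxx ?orbT // /o hijC eqxx.
    by exists i; rewrite ?inE ?eqxx // /o hjiC hji; lia.
  - exact: H.
move=> s hu hs hs0; apply/negP => hcy.
pose o a b := if [&& a \in s, b \in s & next s a == b] then m a b
   else if [&& a \in s, b \in s & next s b == a] then 0 else borient a b.
apply: (@bad_orient o [set x in s]).
- case: borient_ok => h1 h2 h3; split.
  + move=> a b hab; rewrite /o.
    case: (boolP [&& a \in s, b \in s & next s a == b]) => [/and3P [ha hb /eqP e]|h].
      have -> : [&& b \in s, a \in s & next s b == a] = false.
        by apply/negbTE; rewrite negb_and negb_and -e next_next // !orbT.
      by rewrite ha hb e eqxx addn0.
    case: (boolP [&& a \in s, b \in s & next s b == a]) => [/and3P [ha hb /eqP e]|h'].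
      by rewrite hb ha e eqxx add0n msym.
    by rewrite andbCA (negbTE h') andbCA (negbTE h) h1.
  + move=> a; rewrite /o; case: ifP => _; first by rewrite mloop.
    by case: ifP => // _; apply: h2.
  + by move=> a; rewrite /o (negbTE hs0) /=; apply: h3.
- move=> u hu0; case: (boolP (u \in s)) => hus.
    rewrite /outn (bigD1 (next s u)) //= /o hus mem_next hus eqxx /= ltn_addr //.
    exact: next_cycle hcy hus.
  apply: leq_trans (borient_out hu0) _; apply: eq_leq; apply: eq_bigr => w _.
  by rewrite /o (negbTE hus).
- case: s hu hs hs0 hcy {o} => [//|x s] _ _ _ _; apply/set0Pn; exists x; by rewrite inE inE eqxx.
- by rewrite inE.
- move=> u; rewrite inE => hus; exists (next s u); first by rewrite inE mem_next.
  by rewrite /o hus mem_next hus eqxx /=; exact: next_cycle hcy hus.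
- exact: H.
Qed.
End S.

Theorem proposition2p6 (n : nat) (m : 'I_n.+1 -> 'I_n.+1 -> nat) :
  is_graph m ->
  ((forall c, SR m c -> DR m c) <-> (forall c, minimal_SR m c -> DR m c)) /\
  ((forall c, minimal_SR m c -> DR m c) <-> nonsink_acyclic m).
Proof.
case=> hs [hl hc].
have h1 := @ii_iii n m hs hl hc.
have h2 := @iii_i n m hs hl hc.
split; split.
- by move=> H c [hsr _]; apply: H.
- by move=> H c; apply: h2; apply: h1.
- exact: h1.
- by move=> hna c [hsr _]; apply: h2.
Qed.
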